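(* Let $\mathcal C$ be either the category $\mathbf{MC}$ of small monoidal categories and strong monoidal functors, or the category $\mathbf{SMC}$ of small symmetric monoidal categories and symmetric strong monoidal functors, with the nullhomotopy structure $\Theta$ described in the context. Then for every object $\mathcal M$ of $\mathcal C$, the identity functor $\mathrm{id}_{\mathcal M}$ has a strong $\Theta$-kernel and a strong $\Theta$-cokernel whose objects are $\Theta$-trivial monoidal categories.
   Context: For a monoidal functor $F\colon\mathcal M\to\mathcal N$ (strong: coherence maps $e_F\colon I_{\mathcal N}\to F I_{\mathcal M}$ and $m_F$ invertible), $\Theta(F)$ is the set of monoidal natural isomorphisms $F\Rightarrow\Delta_{I_{\mathcal N}}$ to the constant functor at the unit. For $P\colon\mathcal M'\to\mathcal M$, $Q\colon\mathcal N\to\mathcal N'$ and $\varphi\in\Theta(F)$, $Q\bullet\varphi\bullet P\in\Theta(QFP)$ has components $e_Q^{-1}\circ Q(\varphi_{PX})$; write $\varphi\bullet P$, $Q\bullet\varphi$ when the other functor is an identity. A monoidal category $\mathcal Z$ is $\Theta$-trivial if $\Theta(\mathrm{id}_{\mathcal Z})\neq\emptyset$. A $\Theta$-kernel of $F\colon\mathcal M\to\mathcal N$ is $(\mathcal K,k,\theta)$, $k\colon\mathcal K\to\mathcal M$, $\theta\in\Theta(Fk)$, such that for all $(\mathcal H,h,\varphi)$ with $\varphi\in\Theta(Fh)$ there is a unique $h'$ with $kh'=h$ and $\theta\bullet h'=\varphi$. It is strong if moreover for every $a\colon\mathcal A\to\mathcal K$ and $\varphi\in\Theta(ka)$ with $F\bullet\varphi=\theta\bullet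 a$ there is a unique $\alpha\in\Theta(a)$ with $k\bullet\alpha=\varphi$. (Strong) $\Theta$-cokernels are defined dually: $(\mathcal C,c,\theta)$ with $c\colon\mathcal N\to\mathcal C$, $\theta\in\Theta(cF)$, such that every $(\mathcal D,d,\psi)$ with $\psi\in\Theta(dF)$ factors as $d=d'c$ with $d'\bullet\theta=\psi$ for a unique $d'$; strong if moreover for every $a\colon\mathcal C\to\mathcal A$ and $\varphi\in\Theta(ac)$ with $\varphi\bullet F=a\bullet\theta$ there is a unique $\alpha\in\Theta(a)$ with $\alpha\bullet c=\varphi$. *)

(* Defs.v *)
Record Category := {
  Ob :> Type;
  Hom : Ob -> Ob -> Type;
  idm : forall a, Hom a a;
  cmp : forall a b c, Hom b c -> Hom a b -> Hom a c;
  cmp_idl : forall a b (f : Hom a b), cmp a b b (idm b) f = f;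
  cmp_idr : forall a b (f : Hom a b), cmp a a b f (idm a) = f;
  cmp_assoc : forall a b c d (f : Hom a b) (g : Hom b c) (h : Hom c d),
      cmp a c d h (cmp a b c g f) = cmp a b d (cmp b c d h g) f
}.
Arguments Hom {_} a b.
Arguments idm {_} a.
Arguments cmp {_ a b _} g f.
Infix "∘" := cmp (at level 40, left associativity).

Definition is_iso {C : Category} {a b : C} (f : Hom a b) : Prop :=
  exists g : Hom b a, g ∘ f = idm a /\ f ∘ g = idm b.

Record MonCat := {
  mcat :> Category;
  tens : mcat -> mcat -> mcat;
  tensm : forall a b c d, Hom a b -> Hom c d -> Hom (tens a c) (tens b d);
  munit : mcat;
  assoc : forall a b c, Hom (tens (tens a b) c) (tens a (tens b c));
  lunit : forall a, Hom (tens munit a) a;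
  runit : forall a, Hom (tens a munit) a;
  tensm_id : forall a c, tensm a a c c (idm a) (idm c) = idm (tens a c);
  tensm_cmp : forall a b e c d f (f1 : Hom a b) (f2 : Hom b e)
      (g1 : Hom c d) (g2 : Hom d f),
      tensm a e c f (f2 ∘ f1) (g2 ∘ g1)
      = tensm b e d f f2 g2 ∘ tensm a b c d f1 g1;
  assoc_iso : forall a b c, is_iso (assoc a b c);
  lunit_iso : forall a, is_iso (lunit a);
  runit_iso : forall a, is_iso (runit a);
  assoc_nat : forall a a' b b' c c' (f : Hom a a') (g : Hom b b') (h : Hom c c'),
      assoc a' b' c' ∘ tensm _ _ _ _ (tensm _ _ _ _ f g) h
      = tensm _ _ _ _ f (tensm _ _ _ _ g h) ∘ assoc a b c;
  lunit_nat : forall a b (f : Hom a b),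
      lunit b ∘ tensm _ _ _ _ (idm munit) f = f ∘ lunit a;
  runit_nat : forall a b (f : Hom a b),
      runit b ∘ tensm _ _ _ _ f (idm munit) = f ∘ runit a;
  pentagon : forall a b c d,
      assoc a b (tens c d) ∘ assoc (tens a b) c d
      = tensm _ _ _ _ (idm a) (assoc b c d) ∘ assoc a (tens b c) d
        ∘ tensm _ _ _ _ (assoc a b c) (idm d);
  triangle : forall a b,
      tensm _ _ _ _ (idm a) (lunit b) ∘ assoc a munit b
      = tensm _ _ _ _ (runit a) (idm b)
}.
Arguments tens {m} a b.
Arguments tensm {m a b c d} f g.
Arguments munit m : clear implicits.
Arguments assoc {m} a b c.
Arguments lunit {m} a.
Arguments runit {m} a.

Record SymMonCat := {
  smcat :> MonCat;
  braid : forall a b : smcat, Hom (tens a b) (tens b a);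
  braid_nat : forall a a' b b' (f : Hom a a') (g : Hom b b'),
      braid a' b' ∘ tensm f g = tensm g f ∘ braid a b;
  braid_invol : forall a b, braid b a ∘ braid a b = idm (tens a b);
  hexagon : forall a b c,
      assoc b c a ∘ braid a (tens b c) ∘ assoc a b c
      = tensm (idm b) (braid a c) ∘ assoc b a c ∘ tensm (braid a b) (idm c)
}.
Arguments braid {s} a b.

(* Data of a monoidal functor; e_F : I -> F I (with its inverse, as data)
   and m_F : F a (x) F b -> F (a (x) b).  The axioms are in [is_monfun]. *)
Record MonFun (M N : MonCat) := {
  fob :> M -> N;
  fmap : forall a b : M, Hom a b -> Hom (fob a) (fob b);
  fe : Hom (munit N) (fob (munit M));
  fe_inv : Hom (fob (munit M)) (munit N);
  fm : forall a b : M, Hom (tens (fob a) (fob b)) (fob (tens a b))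
}.
Arguments fob {M N} m _.
Arguments fmap {M N} m {a b} f.
Arguments fe {M N} m.
Arguments fe_inv {M N} m.
Arguments fm {M N} m a b.

Record is_monfun {M N : MonCat} (F : MonFun M N) : Prop := {
  fmap_id : forall a, fmap F (idm a) = idm (F a);
  fmap_cmp : forall a b c (f : Hom a b) (g : Hom b c),
      fmap F (g ∘ f) = fmap F g ∘ fmap F f;
  fe_invl : fe_inv F ∘ fe F = idm (munit N);
  fe_invr : fe F ∘ fe_inv F = idm (F (munit M));
  fm_iso : forall a b, is_iso (fm F a b);
  fm_nat : forall a a' b b' (f : Hom a a') (g : Hom b b'),
      fm F a' b' ∘ tensm (fmap F f) (fmap F g) = fmap F (tensm f g) ∘ fm F a b;
  fm_assoc : forall a b c,
      fmap F (assoc a b c) ∘ fm F (tens a b) c ∘ tensm (fm F a b) (idm (F c))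
      = fm F a (tens b c) ∘ tensm (idm (F a)) (fm F b c) ∘ assoc (F a) (F b) (F c);
  fm_lunit : forall b,
      fmap F (lunit b) ∘ fm F (munit M) b ∘ tensm (fe F) (idm (F b)) = lunit (F b);
  fm_runit : forall a,
      fmap F (runit a) ∘ fm F a (munit M) ∘ tensm (idm (F a)) (fe F) = runit (F a)
}.

Definition is_symfun {M N : SymMonCat} (F : MonFun M N) : Prop :=
  forall a b : M, fmap F (braid a b) ∘ fm F a b = fm F b a ∘ braid (F a) (F b).

Definition fcomp {M N P : MonCat} (G : MonFun N P) (F : MonFun M N) : MonFun M P :=
  {| fob := fun x => G (F x);
     fmap := fun a b f => fmap G (fmap F f);
     fe := fmap G (fe F) ∘ fe G;
     fe_inv := fe_inv G ∘ fmap G (fe_inv F);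
     fm := fun a b => fmap G (fm F a b) ∘ fm G (F a) (F b) |}.

Definition idF (M : MonCat) : MonFun M M :=
  {| fob := fun x => x;
     fmap := fun a b f => f;
     fe := idm (munit M);
     fe_inv := idm (munit M);
     fm := fun a b => idm (tens a b) |}.

(* phi in Theta(F): a monoidal natural isomorphism F => Delta_{I_N}, where the
   constant functor Delta_{I_N} has e = id_I and m = lambda_I : I (x) I -> I,
   and sends every morphism to id_I. *)
Definition is_theta {M N : MonCat} (F : MonFun M N)
    (phi : forall X : M, Hom (F X) (munit N)) : Prop :=
  (forall X, is_iso (phi X)) /\
  (forall X Y (f : Hom X Y), phi Y ∘ fmap F f = idm (munit N) ∘ phi X) /\
  (forall X Y, phi (tens X Y) ∘ fm F X Y = lunit (munit N) ∘ tensm (phi X) (phi Y)) /\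
  (phi (munit M) ∘ fe F = idm (munit N)).

Definition whisk {M' M N N' : MonCat} (Q : MonFun N N') (F : MonFun M N)
    (P : MonFun M' M) (phi : forall X : M, Hom (F X) (munit N))
  : forall X : M', Hom (Q (F (P X))) (munit N') :=
  fun X => fe_inv Q ∘ fmap Q (phi (P X)).

Definition theta_trivial (Z : MonCat) : Prop :=
  exists phi : forall X : Z, Hom (idF Z X) (munit Z), is_theta (idF Z) phi.

(* The ambient category C is presented by a type of objects O, their
   underlying monoidal categories U, and a predicate [ok] singling out the
   morphisms of C among the monoidal-functor data. *)
Section KerCoker.
Variables (O : Type) (U : O -> MonCat)
          (ok : forall A B : O, MonFun (U A) (U B) -> Prop).

Definition kfact {M N H K : O} (F : MonFun (U M) (U N)) (k : MonFun (U K) (U M))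
    (theta : forall X : U K, Hom (fcomp F k X) (munit (U N)))
    (h : MonFun (U H) (U M)) (phi : forall X : U H, Hom (fcomp F h X) (munit (U N)))
    (h' : MonFun (U H) (U K)) : Prop :=
  exists e : fcomp k h' = h,
    eq_rect (fcomp k h') (fun G => forall X : U H, Hom (F (G X)) (munit (U N)))
      (whisk (idF (U N)) (fcomp F k) h' theta) h e = phi.

Definition is_theta_kernel {M N : O} (F : MonFun (U M) (U N)) (K : O)
    (k : MonFun (U K) (U M)) (theta : forall X : U K, Hom (fcomp F k X) (munit (U N)))
  : Prop :=
  ok _ _ k /\ is_theta (fcomp F k) theta /\
  forall (H : O) (h : MonFun (U H) (U M))
         (phi : forall X : U H, Hom (fcomp F h X) (munit (U N))),
    ok _ _ h -> is_theta (fcomp F h) phi ->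
    (exists h' : MonFun (U H) (U K), ok _ _ h' /\ kfact F k theta h phi h') /\
    (forall h1 h2 : MonFun (U H) (U K), ok _ _ h1 -> ok _ _ h2 ->
       kfact F k theta h phi h1 -> kfact F k theta h phi h2 -> h1 = h2).

Definition is_strong_theta_kernel {M N : O} (F : MonFun (U M) (U N)) (K : O)
    (k : MonFun (U K) (U M)) (theta : forall X : U K, Hom (fcomp F k X) (munit (U N)))
  : Prop :=
  is_theta_kernel F K k theta /\
  forall (A : O) (a : MonFun (U A) (U K))
         (phi : forall X : U A, Hom (fcomp k a X) (munit (U M))),
    ok _ _ a -> is_theta (fcomp k a) phi ->
    (forall X, whisk F (fcomp k a) (idF (U A)) phi X
               = whisk (idF (U N)) (fcomp F k) a theta X) ->
    exists alpha : forall X : U A, Hom (a X) (munit (U K)),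
      is_theta a alpha /\
      (forall X, whisk k a (idF (U A)) alpha X = phi X) /\
      (forall beta : forall X : U A, Hom (a X) (munit (U K)),
         is_theta a beta -> (forall X, whisk k a (idF (U A)) beta X = phi X) ->
         forall X, beta X = alpha X).

Definition cfact {M N D C : O} (F : MonFun (U M) (U N)) (c : MonFun (U N) (U C))
    (theta : forall X : U M, Hom (fcomp c F X) (munit (U C)))
    (d : MonFun (U N) (U D)) (psi : forall X : U M, Hom (fcomp d F X) (munit (U D)))
    (d' : MonFun (U C) (U D)) : Prop :=
  exists e : fcomp d' c = d,
    eq_rect (fcomp d' c) (fun G => forall X : U M, Hom (G (F X)) (munit (U D)))
      (whisk d' (fcomp c F) (idF (U M)) theta) d e = psi.

Definition is_theta_cokernel {M N : O} (F : MonFun (U M) (U N)) (C : O)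
    (c : MonFun (U N) (U C)) (theta : forall X : U M, Hom (fcomp c F X) (munit (U C)))
  : Prop :=
  ok _ _ c /\ is_theta (fcomp c F) theta /\
  forall (D : O) (d : MonFun (U N) (U D))
         (psi : forall X : U M, Hom (fcomp d F X) (munit (U D))),
    ok _ _ d -> is_theta (fcomp d F) psi ->
    (exists d' : MonFun (U C) (U D), ok _ _ d' /\ cfact F c theta d psi d') /\
    (forall d1 d2 : MonFun (U C) (U D), ok _ _ d1 -> ok _ _ d2 ->
       cfact F c theta d psi d1 -> cfact F c theta d psi d2 -> d1 = d2).

Definition is_strong_theta_cokernel {M N : O} (F : MonFun (U M) (U N)) (C : O)
    (c : MonFun (U N) (U C)) (theta : forall X : U M, Hom (fcomp c F X) (munit (U C)))
  : Prop :=
  is_theta_cokernel F C c theta /\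
  forall (A : O) (a : MonFun (U C) (U A))
         (phi : forall Y : U N, Hom (fcomp a c Y) (munit (U A))),
    ok _ _ a -> is_theta (fcomp a c) phi ->
    (forall X, whisk (idF (U A)) (fcomp a c) F phi X
               = whisk a (fcomp c F) (idF (U M)) theta X) ->
    exists alpha : forall Y : U C, Hom (a Y) (munit (U A)),
      is_theta a alpha /\
      (forall Y, whisk (idF (U A)) a c alpha Y = phi Y) /\
      (forall beta : forall Y : U C, Hom (a Y) (munit (U A)),
         is_theta a beta -> (forall Y, whisk (idF (U A)) a c beta Y = phi Y) ->
         forall Y, beta Y = alpha Y).

Definition kernel_cokernel_of_id (M : O) : Prop :=
  (exists (K : O) (k : MonFun (U K) (U M))
          (theta : forall X : U K, Hom (fcomp (idF (U M)) k X) (munit (U M))),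
      is_strong_theta_kernel (idF (U M)) K k theta /\ theta_trivial (U K)) /\
  (exists (C : O) (c : MonFun (U M) (U C))
          (theta : forall X : U M, Hom (fcomp c (idF (U M)) X) (munit (U C))),
      is_strong_theta_cokernel (idF (U M)) C c theta /\ theta_trivial (U C)).

End KerCoker.

Definition MC_ok (A B : MonCat) (F : MonFun A B) : Prop := is_monfun F.
Definition SMC_ok (A B : SymMonCat) (F : MonFun (smcat A) (smcat B)) : Prop :=
  is_monfun F /\ is_symfun F.

(* Main.v *)
Require Import Defs.
From Stdlib Require Import ProofIrrelevance FunctionalExtensionality IndefiniteDescription Eqdep.

Lemma cancel_r {C : Category} {a b c : C} (f g : Hom b c) (x : Hom a b) :
  is_iso x -> f ∘ x = g ∘ x -> f = g.
Proof.
  intros [y [H1 H2]] E.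
  rewrite <- (cmp_idr _ _ _ f), <- (cmp_idr _ _ _ g), <- H2, !cmp_assoc, E. reflexivity.
Qed.

Lemma cancel_l {C : Category} {a b c : C} (f g : Hom a b) (x : Hom b c) :
  is_iso x -> x ∘ f = x ∘ g -> f = g.
Proof.
  intros [y [H1 H2]] E.
  rewrite <- (cmp_idl _ _ _ f), <- (cmp_idl _ _ _ g), <- H1, <- !cmp_assoc, E. reflexivity.
Qed.

Lemma iso_cmp {C : Category} {a b c : C} (f : Hom a b) (g : Hom b c) :
  is_iso f -> is_iso g -> is_iso (g ∘ f).
Proof.
  intros [f' [F1 F2]] [g' [G1 G2]]. exists (f' ∘ g'). split.
  - rewrite cmp_assoc, <- (cmp_assoc _ _ _ _ _ g g' f'), G1, cmp_idr. exact F1.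
  - rewrite cmp_assoc, <- (cmp_assoc _ _ _ _ _ f' f g), F2, cmp_idr. exact G2.
Qed.

Lemma iso_id {C : Category} (a : C) : is_iso (idm a).
Proof. exists (idm a). split; apply cmp_idl. Qed.

Lemma tcmp {M : MonCat} {a b e c d f : M} (f1 : Hom a b) (f2 : Hom b e) (g1 : Hom c d) (g2 : Hom d f) :
  tensm (f2 ∘ f1) (g2 ∘ g1) = tensm f2 g2 ∘ tensm f1 g1.
Proof. apply tensm_cmp. Qed.
Lemma tid {M : MonCat} (a c : M) : tensm (idm a) (idm c) = idm (tens a c).
Proof. apply tensm_id. Qed.
Lemma anat {M : MonCat} {a a' b b' c c' : M} (f : Hom a a') (g : Hom b b') (h : Hom c c') :
  assoc a' b' c' ∘ tensm (tensm f g) h = tensm f (tensm g h) ∘ assoc a b c.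
Proof. apply assoc_nat. Qed.
Lemma lnat {M : MonCat} {a b : M} (f : Hom a b) : lunit b ∘ tensm (idm (munit M)) f = f ∘ lunit a.
Proof. apply lunit_nat. Qed.
Lemma rnat {M : MonCat} {a b : M} (f : Hom a b) : runit b ∘ tensm f (idm (munit M)) = f ∘ runit a.
Proof. apply runit_nat. Qed.

Lemma tl {M : MonCat} {a b c d : M} (f : Hom b c) (g : Hom a b) :
  tensm (idm d) (f ∘ g) = tensm (idm d) f ∘ tensm (idm d) g.
Proof. rewrite <- tcmp, cmp_idl. reflexivity. Qed.
Lemma tr {M : MonCat} {a b c d : M} (f : Hom b c) (g : Hom a b) :
  tensm (f ∘ g) (idm d) = tensm f (idm d) ∘ tensm g (idm d).
Proof. rewrite <- tcmp, cmp_idl. reflexivity. Qed.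

Lemma tiso {M : MonCat} {a b c d : M} (f : Hom a b) (g : Hom c d) :
  is_iso f -> is_iso g -> is_iso (tensm f g).
Proof.
  intros [f' [F1 F2]] [g' [G1 G2]]. exists (tensm f' g').
  rewrite <- !tcmp, F1, F2, G1, G2, !tid. split; reflexivity.
Qed.

Lemma faith_l {M : MonCat} {a b : M} (f g : Hom a b) :
  tensm (idm (munit M)) f = tensm (idm (munit M)) g -> f = g.
Proof.
  intros E. apply (cancel_r _ _ (lunit a)). apply lunit_iso.
  rewrite <- !lnat, E. reflexivity.
Qed.
Lemma faith_r {M : MonCat} {a b : M} (f g : Hom a b) :
  tensm f (idm (munit M)) = tensm g (idm (munit M)) -> f = g.
Proof.
  intros E. apply (cancel_r _ _ (runit a)). apply runit_iso.
  rewrite <- !rnat, E. reflexivity.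
Qed.

Lemma kelly {M : MonCat} (a b : M) :
  lunit (tens a b) ∘ assoc (munit M) a b = tensm (lunit a) (idm b).
Proof.
  set (I := munit M).
  apply faith_l.
  apply (cancel_r _ _ (assoc I (tens I a) b ∘ tensm (assoc I I a) (idm b))).
  { apply iso_cmp. apply tiso. apply assoc_iso. apply iso_id. apply assoc_iso. }
  transitivity (assoc I a b ∘ tensm (tensm (runit I) (idm a)) (idm b)).
  - rewrite tl, <- cmp_assoc, (cmp_assoc _ _ _ _ _ _ (assoc I (tens I a) b)).
    rewrite <- pentagon, cmp_assoc, triangle.
    rewrite anat, tid. reflexivity.
  - rewrite cmp_assoc, <- anat, <- cmp_assoc, <- tr, triangle. reflexivity.
Qed.

Lemma lr_unit {M : MonCat} : lunit (munit M) = runit (munit M).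
Proof.
  assert (E1 : lunit (tens (munit M) (munit M)) = tensm (idm (munit M)) (lunit (munit M))).
  { apply (cancel_l _ _ (lunit (munit M))). apply lunit_iso. rewrite lnat. reflexivity. }
  apply faith_r. rewrite <- triangle, <- kelly, E1. reflexivity.
Qed.

Lemma braid_II_gen (M : MonCat) (s : Hom (tens (munit M) (munit M)) (tens (munit M) (munit M)))
  (b : Hom (tens (munit M) (tens (munit M) (munit M))) (tens (tens (munit M) (munit M)) (munit M)))
  (N1 : s ∘ tensm (idm (munit M)) (lunit (munit M)) = tensm (lunit (munit M)) (idm (munit M)) ∘ b)
  (Hx : assoc (munit M) (munit M) (munit M) ∘ b ∘ assoc (munit M) (munit M) (munit M)
      = tensm (idm (munit M)) s ∘ assoc (munit M) (munit M) (munit M) ∘ tensm s (idm (munit M)))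
  (Inv : s ∘ s = idm _) : s = idm _.
Proof.
  set (u := lunit (munit M)) in *.
  destruct (lunit_iso M (munit M)) as [u' [U1 U2]]. fold u in U1, U2.
  set (σ := u ∘ s ∘ u').
  assert (Su : σ ∘ u = u ∘ s).
  { unfold σ. rewrite <- cmp_assoc, U1, cmp_idr. reflexivity. }
  assert (T : tensm (idm (munit M)) u ∘ assoc (munit M) (munit M) (munit M) = tensm u (idm (munit M))).
  { unfold u. rewrite triangle, <- lr_unit. reflexivity. }
  assert (S1 : s ∘ tensm u (idm (munit M)) = (tensm (idm (munit M)) σ ∘ tensm σ (idm (munit M))) ∘ tensm u (idm (munit M))).
  { transitivity (tensm (idm (munit M)) u ∘ (assoc (munit M) (munit M) (munit M) ∘ b ∘ assoc (munit M) (munit M) (munit M))).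
    - rewrite !cmp_assoc, T, <- N1, <- cmp_assoc, T. reflexivity.
    - rewrite Hx, !cmp_assoc, <- tl, <- Su, tl.
      rewrite <- (cmp_assoc _ _ _ _ _ _ _ (tensm (idm (munit M)) σ)), T.
      rewrite <- (cmp_assoc _ _ _ _ _ _ _ (tensm (idm (munit M)) σ)), <- tr, <- Su, tr.
      rewrite !cmp_assoc. reflexivity. }
  apply cancel_r in S1; [| apply tiso; [apply lunit_iso | apply iso_id]].
  assert (S2 : σ ∘ u = σ ∘ σ ∘ u).
  { rewrite Su, S1, cmp_assoc. unfold u at 1. rewrite lnat. fold u.
    unfold u. rewrite lr_unit, <- cmp_assoc, rnat, cmp_assoc. reflexivity. }
  apply cancel_r in S2; [| apply lunit_iso].
  assert (S3 : σ ∘ σ = idm (munit M)).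
  { unfold σ. rewrite !cmp_assoc, <- (cmp_assoc _ _ _ _ _ u u'), U1, cmp_idr.
    rewrite <- (cmp_assoc _ _ _ _ _ s s), Inv, cmp_idr. exact U2. }
  rewrite S3 in S2. rewrite S1, S2, tid. apply cmp_idl.
Qed.

Lemma braid_II {M : SymMonCat} : braid (munit M) (munit M) = idm (tens (munit M) (munit M)).
Proof.
  apply (braid_II_gen M _ (braid (munit M) (tens (munit M) (munit M)))).
  - apply braid_nat.
  - apply hexagon.
  - apply braid_invol.
Qed.

Lemma sig_eq {A : Type} {P : A -> Prop} (x y : {a : A | P a}) : proj1_sig x = proj1_sig y -> x = y.
Proof. destruct x, y; simpl; intros ->. f_equal. apply proof_irrelevance. Qed.

Record KOb (M : MonCat) := mkK { kx : M; kphi : Hom kx (munit M); kiso : is_iso kphi }.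
Arguments mkK {M} kx kphi kiso.
Arguments kx {M} k.
Arguments kphi {M} k.
Arguments kiso {M} k.

Definition KHom {M : MonCat} (X Y : KOb M) := { f : Hom (kx X) (kx Y) | kphi Y ∘ f = kphi X }.

Definition Kid {M : MonCat} (X : KOb M) : KHom X X := exist _ (idm (kx X)) (cmp_idr _ _ _ _).
Definition Kcmp {M : MonCat} (X Y Z : KOb M) (g : KHom Y Z) (f : KHom X Y) : KHom X Z.
Proof.
  exists (proj1_sig g ∘ proj1_sig f).
  destruct g as [g pg], f as [f pf]; simpl. rewrite cmp_assoc, pg, pf. reflexivity.
Defined.

Definition KCat (M : MonCat) : Category.
Proof.
  refine (Build_Category (KOb M) KHom Kid Kcmp _ _ _);
  intros; apply sig_eq; simpl.
  - apply cmp_idl. - apply cmp_idr. - apply cmp_assoc.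
Defined.

Lemma tsplit_r {M : MonCat} {a a' b c d : M} (f : Hom a a') (g : Hom c d) (h : Hom b c) :
  tensm f (g ∘ h) = tensm (idm a') g ∘ tensm f h.
Proof. rewrite <- tcmp, cmp_idl. reflexivity. Qed.
Lemma tsplit_l {M : MonCat} {a a' b c d : M} (f : Hom a a') (g : Hom c d) (h : Hom b c) :
  tensm (g ∘ h) f = tensm g (idm a') ∘ tensm h f.
Proof. rewrite <- tcmp, cmp_idl. reflexivity. Qed.

Lemma unit_tri {M : MonCat} :
  tensm (idm (munit M)) (lunit (munit M)) ∘ assoc (munit M) (munit M) (munit M)
  = tensm (lunit (munit M)) (idm (munit M)).
Proof. rewrite triangle, <- lr_unit. reflexivity. Qed.

Definition Ktens {M : MonCat} (X Y : KOb M) : KOb M :=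
  mkK (tens (kx X) (kx Y)) (lunit (munit M) ∘ tensm (kphi X) (kphi Y))
      (iso_cmp _ _ (tiso _ _ (kiso X) (kiso Y)) (lunit_iso M _)).

Definition Ktensm {M : MonCat} (a b c d : KOb M) (f : KHom a b) (g : KHom c d) :
  KHom (Ktens a c) (Ktens b d).
Proof.
  exists (tensm (proj1_sig f) (proj1_sig g)).
  destruct f as [f pf], g as [g pg]; simpl.
  rewrite <- cmp_assoc, <- tcmp, pf, pg. reflexivity.
Defined.

Definition Kunit (M : MonCat) : KOb M := mkK (munit M) (idm _) (iso_id _).

Definition Kassoc {M : MonCat} (a b c : KOb M) : KHom (Ktens (Ktens a b) c) (Ktens a (Ktens b c)).
Proof.
  exists (assoc (kx a) (kx b) (kx c)). simpl.
  rewrite tsplit_r, (cmp_assoc _ _ _ _ _ _ (tensm _ (lunit _))), <- cmp_assoc.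
  rewrite <- anat, cmp_assoc, <- (cmp_assoc _ _ _ _ _ _ _ (lunit (munit M))), unit_tri.
  rewrite tsplit_l. symmetry. apply cmp_assoc.
Defined.

Definition Klunit {M : MonCat} (a : KOb M) : KHom (Ktens (Kunit M) a) a.
Proof. exists (lunit (kx a)). simpl. symmetry. apply lnat. Defined.

Definition Krunit {M : MonCat} (a : KOb M) : KHom (Ktens a (Kunit M)) a.
Proof. exists (runit (kx a)). simpl. rewrite lr_unit. symmetry. apply rnat. Defined.

Lemma Kiso {M : MonCat} {X Y : KOb M} (f : KHom X Y) : is_iso (proj1_sig f) -> @is_iso (KCat M) X Y f.
Proof.
  intros [g [G1 G2]].
  assert (pg : kphi X ∘ g = kphi Y).
  { destruct f as [f pf]; simpl in *. rewrite <- pf, <- cmp_assoc, G2. apply cmp_idr. }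
  exists (exist _ g pg). split; apply sig_eq; simpl; assumption.
Qed.

Definition KM (M : MonCat) : MonCat.
Proof.
  refine (Build_MonCat (KCat M) Ktens Ktensm (Kunit M) Kassoc Klunit Krunit _ _ _ _ _ _ _ _ _ _).
  - intros; apply sig_eq; apply tensm_id.
  - intros; apply sig_eq; apply tensm_cmp.
  - intros; apply Kiso; apply assoc_iso.
  - intros; apply Kiso; apply lunit_iso.
  - intros; apply Kiso; apply runit_iso.
  - intros; apply sig_eq; apply assoc_nat.
  - intros; apply sig_eq; apply lunit_nat.
  - intros; apply sig_eq; apply runit_nat.
  - intros; apply sig_eq; apply pentagon.
  - intros; apply sig_eq; apply triangle.
Defined.

Definition kk (M : MonCat) : MonFun (KM M) M :=
  {| fob := fun X : KM M => kx X;
     fmap := fun a b (f : Hom a b) => proj1_sig f;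
     fe := idm (munit M);
     fe_inv := idm (munit M);
     fm := fun a b => idm (tens (kx a) (kx b)) |}.

Definition kth (M : MonCat) : forall X : KM M, Hom (fcomp (idF M) (kk M) X) (munit M) :=
  fun X => kphi X.

Lemma kk_monfun (M : MonCat) : is_monfun (kk M).
Proof.
  constructor; simpl; intros.
  - reflexivity.
  - reflexivity.
  - apply cmp_idl.
  - apply cmp_idl.
  - apply iso_id.
  - rewrite cmp_idl, cmp_idr. reflexivity.
  - rewrite !tid, !cmp_idr, cmp_idl. reflexivity.
  - rewrite tid, !cmp_idr. reflexivity.
  - rewrite tid, !cmp_idr. reflexivity.
Qed.

Lemma kth_theta (M : MonCat) : is_theta (fcomp (idF M) (kk M)) (kth M).
Proof.
  unfold kth. split; [|split; [|split]]; simpl; intros.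
  - apply kiso.
  - destruct f as [f pf]; simpl. rewrite cmp_idl. exact pf.
  - rewrite !cmp_idr. reflexivity.
  - rewrite !cmp_idr. reflexivity.
Qed.

Lemma mf_inj {A B : MonCat} (o : A -> B) m1 m2 fe1 fe2 fi1 fi2 fm1 fm2 :
  Build_MonFun A B o m1 fe1 fi1 fm1 = Build_MonFun A B o m2 fe2 fi2 fm2 ->
  m1 = m2 /\ fe1 = fe2 /\ fi1 = fi2 /\ fm1 = fm2.
Proof.
  intros E. injection E. intros. 
  repeat match goal with Hx : existT _ _ _ = existT _ _ _ |- _ => apply inj_pair2 in Hx end.
  auto.
Qed.

Lemma bet {A B : MonCat} (o : A -> B) m fe fe' fi fi' fm fm' (P : (A -> B) -> Type) (u v : P o) :
  fe' = fe -> fi' = fi -> fm' = fm -> u = v ->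
  exists e : Build_MonFun A B o m fe' fi' fm' = Build_MonFun A B o m fe fi fm,
    eq_rect (Build_MonFun A B o m fe' fi' fm') (fun G => P (fob G)) u _ e = v.
Proof. intros; subst; exists eq_refl; reflexivity. Qed.

Lemma eq_rect_fob {A B : MonCat} (Q : (A -> B) -> Type) (G1 G2 : MonFun A B) (e : G1 = G2)
  (u : Q (fob G1)) :
  eq_rect G1 (fun G => Q (fob G)) u G2 e = eq_rect (fob G1) Q u (fob G2) (f_equal (@fob A B) e).
Proof. destruct e; reflexivity. Qed.

Lemma to_unit_unique {M : MonCat} (X : KOb M) (f g : KHom X (Kunit M)) : f = g.
Proof.
  apply sig_eq. destruct f as [f pf], g as [g pg]; simpl in *.
  rewrite cmp_idl in pf, pg. congruence.
Qed.

Definition hk {M H : MonCat} (h : MonFun H M)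
  (phi : forall X : H, Hom (fcomp (idF M) h X) (munit M))
  (Hphi : is_theta (fcomp (idF M) h) phi) (Hh : is_monfun h) : MonFun H (KM M).
Proof.
  refine (Build_MonFun H (KM M) (fun X => mkK (h X) (phi X) (proj1 Hphi X))
            (fun a b f => exist _ (fmap h f) _) (exist _ (fe h) _) (exist _ (fe_inv h) _)
            (fun a b => exist _ (fm h a b) _));
  destruct Hphi as [Hiso [Hnat [Hm Hu]]]; simpl in *.
  - rewrite Hnat. apply cmp_idl.
  - rewrite cmp_idr in Hu. exact Hu.
  - rewrite cmp_idr in Hu.
    rewrite cmp_idl, <- (cmp_idr _ _ _ (phi (munit H))), <- (fe_invr _ Hh), cmp_assoc.
    rewrite Hu. symmetry. apply cmp_idl.
  - rewrite <- Hm. rewrite cmp_idr. reflexivity.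
Defined.

Lemma hk_monfun {M H : MonCat} h phi Hphi Hh : is_monfun (@hk M H h phi Hphi Hh).
Proof.
  destruct Hphi as [Hiso [Hnat [Hm Hu]]].
  constructor; simpl; intros; try (apply sig_eq; simpl).
  - apply (fmap_id _ Hh).
  - apply (fmap_cmp _ Hh).
  - apply (fe_invl _ Hh).
  - apply (fe_invr _ Hh).
  - apply Kiso; simpl. apply (fm_iso _ Hh).
  - apply (fm_nat _ Hh).
  - apply (fm_assoc _ Hh).
  - apply (fm_lunit _ Hh).
  - apply (fm_runit _ Hh).
Qed.

Lemma hk_fact {M H : MonCat} h phi Hphi Hh :
  kfact MonCat (fun A => A) (M:=M) (N:=M) (H:=H) (K:=KM M) (idF M) (kk M) (kth M) h phi
    (@hk M H h phi Hphi Hh).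
Proof.
  destruct h as [o m fe fi fm].
  unfold kfact.
  refine (bet o m fe _ fi _ fm _ (fun o => forall X : H, Hom (o X) (munit M)) _ _ _ _ _ _).
  - apply cmp_idr.
  - apply cmp_idl.
  - extensionality a. extensionality b. apply cmp_idr.
  - extensionality X. unfold whisk, kth. simpl. destruct Hphi as [? [? [? ?]]]. apply cmp_idl.
Qed.

Lemma ob_eq_gen {H M : MonCat} (a1 a2 : H -> M) (pe : a1 = a2)
  (b1 : forall x, Hom (a1 x) (munit M)) (b2 : forall x, Hom (a2 x) (munit M))
  (c1 : forall x, is_iso (b1 x)) (c2 : forall x, is_iso (b2 x)) :
  eq_rect a1 (fun o => forall X : H, Hom (o X) (munit M)) b1 a2 pe = b2 ->
  (fun x => mkK (a1 x) (b1 x) (c1 x)) = (fun x => mkK (a2 x) (b2 x) (c2 x)).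
Proof.
  destruct pe; simpl; intros <-. replace c2 with c1 by apply proof_irrelevance. reflexivity.
Qed.

Lemma ob_eq {H M : MonCat} (o1 o2 : H -> KOb M)
  (pe : (fun x => kx (o1 x)) = (fun x => kx (o2 x))) :
  eq_rect _ (fun o => forall X : H, Hom (o X) (munit M)) (fun X => idm _ ∘ kphi (o1 X)) _ pe
    = (fun X => idm _ ∘ kphi (o2 X)) -> o1 = o2.
Proof.
  intros E.
  assert (R : forall o : H -> KOb M, (fun X => idm _ ∘ kphi (o X)) = (fun X => kphi (o X))).
  { intros o. extensionality X. apply cmp_idl. }
  rewrite !R in E.
  assert (Eta : forall o : H -> KOb M, o = fun x => mkK (kx (o x)) (kphi (o x)) (kiso (o x))).
  { intros o. extensionality x. destruct (o x). reflexivity. }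
  rewrite (Eta o1), (Eta o2).
  exact (ob_eq_gen _ _ pe (fun x => kphi (o1 x)) (fun x => kphi (o2 x)) _ _ E).
Qed.

Lemma k_uniq {M H : MonCat} (g1 g2 : MonFun H (KM M))
  (e : fcomp (kk M) g1 = fcomp (kk M) g2) :
  eq_rect (fcomp (kk M) g1) (fun G : MonFun H M => forall X : H, Hom (idF M (G X)) (munit M))
    (whisk (idF M) (fcomp (idF M) (kk M)) g1 (kth M)) (fcomp (kk M) g2) e
  = whisk (idF M) (fcomp (idF M) (kk M)) g2 (kth M) -> g1 = g2.
Proof.
  intros E.
  pose proof (@eq_rect_fob H M (fun o : H -> M => forall X : H, Hom (o X) (munit M))
     (fcomp (kk M) g1) (fcomp (kk M) g2) e
     (whisk (idF M) (fcomp (idF M) (kk M)) g1 (kth M))) as L.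
  pose proof (eq_trans (eq_sym L) E) as E'. clear L E.
  destruct g1 as [o1 m1 fe1 fi1 fm1], g2 as [o2 m2 fe2 fi2 fm2].
  assert (Ho : o1 = o2) by exact (ob_eq o1 o2 _ E').
  subst o2. clear E'.
  apply mf_inj in e. destruct e as [Em [Efe [Efi Efm]]].
  assert (m1 = m2).
  { extensionality a. extensionality b. extensionality f. apply sig_eq.
    exact (f_equal (fun F => F a b f) Em). }
  assert (fe1 = fe2).
  { apply sig_eq. rewrite !cmp_idr in Efe. exact Efe. }
  assert (fi1 = fi2).
  { apply sig_eq. rewrite !cmp_idl in Efi. exact Efi. }
  assert (fm1 = fm2).
  { extensionality a. extensionality b. apply sig_eq.
    pose proof (f_equal (fun F => F a b) Efm) as Q. simpl in Q. rewrite !cmp_idr in Q. exact Q. }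
  subst. reflexivity.
Qed.

Lemma KM_trivial (M : MonCat) : theta_trivial (KM M).
Proof.
  exists (fun X : KM M => (exist _ (kphi X) (cmp_idl _ _ _ _) : KHom X (Kunit M))).
  split; [|split; [|split]]; intros.
  - apply Kiso; simpl. apply kiso.
  - apply to_unit_unique.
  - apply to_unit_unique.
  - apply to_unit_unique.
Qed.

Lemma k_strong {M A : MonCat} (a : MonFun A (KM M))
  (phi : forall X : A, Hom (fcomp (kk M) a X) (munit M)) :
  is_theta (fcomp (kk M) a) phi ->
  (forall X, whisk (idF M) (fcomp (kk M) a) (idF A) phi X
             = whisk (idF M) (fcomp (idF M) (kk M)) a (kth M) X) ->
  exists alpha : forall X : A, Hom (a X) (munit (KM M)),
    is_theta a alpha /\
    (forall X, whisk (kk M) a (idF A) alpha X = phi X) /\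
    (forall beta : forall X : A, Hom (a X) (munit (KM M)),
       is_theta a beta -> (forall X, whisk (kk M) a (idF A) beta X = phi X) ->
       forall X, beta X = alpha X).
Proof.
  intros _ Hw.
  exists (fun X => (exist _ (kphi (a X)) (cmp_idl _ _ _ _) : KHom (a X) (Kunit M))).
  split; [|split].
  - split; [|split; [|split]]; intros.
    + apply Kiso; simpl. apply kiso.
    + apply to_unit_unique.
    + apply to_unit_unique.
    + apply to_unit_unique.
  - intros X. specialize (Hw X). unfold whisk, kth in *. simpl in *.
    rewrite !cmp_idl in Hw. rewrite Hw. apply cmp_idl.
  - intros. apply to_unit_unique.
Qed.

Lemma MC_kernel (M : MonCat) :
  exists (K : MonCat) (k : MonFun K M)
         (theta : forall X : K, Hom (fcomp (idF M) k X) (munit M)),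
    is_strong_theta_kernel MonCat (fun A => A) MC_ok (M:=M) (N:=M) (idF M) K k theta
    /\ theta_trivial K.
Proof.
  exists (KM M), (kk M), (kth M). split; [split|].
  - split; [apply kk_monfun|split; [apply kth_theta|]].
    intros H h phi Hh Hphi. split.
    + exists (hk h phi Hphi Hh). split; [apply hk_monfun | apply hk_fact].
    + intros h1 h2 _ _ [e1 E1] [e2 E2].
      clear Hh Hphi. revert phi E1 e2 E2. destruct e1. intros phi E1 e2 E2.
      simpl in E1. subst phi.
      symmetry. exact (k_uniq h2 h1 e2 E2).
  - intros A a phi _ Hphi Hw. exact (k_strong a phi Hphi Hw).
  - apply KM_trivial.
Qed.

Lemma unit_eq (x y : unit) : x = y.
Proof. destruct x, y; reflexivity. Qed.

Definition CCat (M : MonCat) : Category.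
Proof.
  refine (Build_Category M (fun _ _ => unit) (fun _ => tt) (fun _ _ _ _ _ => tt) _ _ _);
  intros; apply unit_eq.
Defined.

Definition CM (M : MonCat) : MonCat.
Proof.
  refine (Build_MonCat (CCat M) (fun a b : M => tens a b) (fun _ _ _ _ _ _ => tt) (munit M)
            (fun _ _ _ => tt) (fun _ => tt) (fun _ => tt) _ _ _ _ _ _ _ _ _ _);
  intros; try apply unit_eq; exists tt; split; apply unit_eq.
Defined.

Definition cc (M : MonCat) : MonFun M (CM M) :=
  Build_MonFun M (CM M) (fun x => x) (fun _ _ _ => tt) tt tt (fun _ _ => tt).

Definition cth (M : MonCat) : forall X : M, Hom (fcomp (cc M) (idF M) X) (munit (CM M)) :=
  fun _ => tt.

Lemma cc_monfun (M : MonCat) : is_monfun (cc M).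
Proof. constructor; intros; try apply unit_eq. exists tt; split; apply unit_eq. Qed.

Lemma cth_theta (M : MonCat) : is_theta (fcomp (cc M) (idF M)) (cth M).
Proof.
  split; [|split; [|split]]; intros; try apply unit_eq. exists tt; split; apply unit_eq.
Qed.

Lemma CM_trivial (M : MonCat) : theta_trivial (CM M).
Proof.
  exists (fun _ => tt). split; [|split; [|split]]; intros; try apply unit_eq.
  exists tt; split; apply unit_eq.
Qed.

Definition pinv {M D : MonCat} (d : MonFun M D)
  (psi : forall X : M, Hom (d X) (munit D))
  (Hpsi : is_theta (fcomp d (idF M)) psi) (X : M) : Hom (munit D) (d X) :=
  proj1_sig (constructive_indefinite_description _ (proj1 Hpsi X)).

Lemma pinv_l {M D : MonCat} (d : MonFun M D) (psi : forall X : M, Hom (d X) (munit D)) Hpsi (X : M) : @pinv M D d psi Hpsi X ∘ psi X = idm (d X).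
Proof. unfold pinv. destruct constructive_indefinite_description as [g [G1 G2]]. exact G1. Qed.
Lemma pinv_r {M D : MonCat} (d : MonFun M D) (psi : forall X : M, Hom (d X) (munit D)) Hpsi (X : M) : psi X ∘ @pinv M D d psi Hpsi X = idm (munit D).
Proof. unfold pinv. destruct constructive_indefinite_description as [g [G1 G2]]. exact G2. Qed.

Lemma dfmap {M D : MonCat} d psi Hpsi (a b : M) (f : Hom a b) :
  fmap d f = @pinv M D d psi Hpsi b ∘ psi a.
Proof.
  pose proof (proj1 (proj2 Hpsi) a b f) as N. simpl in N. rewrite cmp_idl in N.
  rewrite <- N, cmp_assoc. rewrite pinv_l. symmetry. apply cmp_idl.
Qed.

Lemma dfm {M D : MonCat} d psi Hpsi (Hd : is_monfun d) (a b : M) :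
  fm d a b = @pinv M D d psi Hpsi (tens a b) ∘ (lunit (munit D) ∘ tensm (psi a) (psi b)).
Proof.
  pose proof (proj1 (proj2 (proj2 Hpsi)) a b) as N. simpl in N.
  rewrite (fmap_id _ Hd), cmp_idl in N.
  transitivity (pinv d psi Hpsi (tens a b) ∘ (psi (tens a b) ∘ fm d a b)).
  - rewrite cmp_assoc, pinv_l. symmetry. apply cmp_idl.
  - f_equal. exact N.
Qed.

Lemma dfe {M D : MonCat} d psi Hpsi (Hd : is_monfun d) :
  fe d = @pinv M D d psi Hpsi (munit M).
Proof.
  pose proof (proj2 (proj2 (proj2 Hpsi))) as N. simpl in N.
  rewrite (fmap_id _ Hd), cmp_idl in N.
  rewrite <- (cmp_idl _ _ _ (fe d)), <- (pinv_l d psi Hpsi), <- cmp_assoc, N. apply cmp_idr.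
Qed.

Definition dd {M D : MonCat} (d : MonFun M D)
  (psi : forall X : M, Hom (d X) (munit D))
  (Hpsi : is_theta (fcomp d (idF M)) psi) : MonFun (CM M) D :=
  Build_MonFun (CM M) D (fun x : M => d x) (fun a b _ => pinv d psi Hpsi b ∘ psi a)
    (fe d) (fe_inv d) (fm d).

Lemma dd_monfun {M D : MonCat} d psi Hpsi (Hd : is_monfun d) : is_monfun (@dd M D d psi Hpsi).
Proof.
  constructor; simpl; intros.
  - apply pinv_l.
  - rewrite cmp_assoc, <- (cmp_assoc _ _ _ _ _ _ (psi b)), pinv_r, cmp_idr. reflexivity.
  - apply (fe_invl _ Hd).
  - apply (fe_invr _ Hd).
  - apply (fm_iso _ Hd).
  - rewrite !(dfm d psi Hpsi Hd).
    rewrite <- !cmp_assoc, <- tcmp, !cmp_assoc, !pinv_r, !cmp_idl.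
    rewrite <- (cmp_assoc _ _ _ _ _ _ (psi (tens a b))), pinv_r, cmp_idr. reflexivity.
  - rewrite <- (dfmap d psi Hpsi _ _ (assoc a b c)). apply (fm_assoc _ Hd).
  - rewrite <- (dfmap d psi Hpsi _ _ (lunit b)). apply (fm_lunit _ Hd).
  - rewrite <- (dfmap d psi Hpsi _ _ (runit a)). apply (fm_runit _ Hd).
Qed.

Lemma bet2 {A B : MonCat} (o : A -> B) m m' fe fe' fi fi' fm fm' (P : (A -> B) -> Type) (u v : P o) :
  m' = m -> fe' = fe -> fi' = fi -> fm' = fm -> u = v ->
  exists e : Build_MonFun A B o m' fe' fi' fm' = Build_MonFun A B o m fe fi fm,
    eq_rect (Build_MonFun A B o m' fe' fi' fm') (fun G => P (fob G)) u _ e = v.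
Proof. intros; subst; exists eq_refl; reflexivity. Qed.

Lemma dd_fact {M D : MonCat} (d : MonFun M D) psi Hpsi (Hd : is_monfun d) :
  cfact MonCat (fun A => A) (M:=M) (N:=M) (D:=D) (C:=CM M) (idF M) (cc M) (cth M) d psi
    (@dd M D d psi Hpsi).
Proof.
  assert (Efe := dfe d psi Hpsi Hd).
  assert (Efm := dfm d psi Hpsi Hd).
  assert (Efmap := dfmap d psi Hpsi).
  assert (Hfi := fe_invl _ Hd).
  pose proof (pinv_l d psi Hpsi) as Hid.
  unfold dd. unfold cfact.
  destruct d as [o m fe fi fm]. simpl in *.
  refine (bet2 o m _ fe _ fi _ fm _ (fun o => forall X : M, Hom (o X) (munit D)) _ _ _ _ _ _ _).
  - extensionality a. extensionality b. extensionality f. symmetry. apply Efmap.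
  - simpl. rewrite Hid. apply cmp_idl.
  - simpl. rewrite Hid. apply cmp_idr.
  - extensionality a. extensionality b. simpl. rewrite Hid. apply cmp_idl.
  - extensionality X. unfold whisk, cth. simpl.
    rewrite cmp_assoc, <- Efe. rewrite Hfi. apply cmp_idl.
Qed.

Lemma c_uniq {M D : MonCat} (d1 d2 : MonFun (CM M) D) (H1 : is_monfun d1) (H2 : is_monfun d2)
  (e : fcomp d2 (cc M) = fcomp d1 (cc M)) :
  eq_rect (fcomp d2 (cc M)) (fun G : MonFun M D => forall X : M, Hom (G (idF M X)) (munit D))
    (whisk d2 (fcomp (cc M) (idF M)) (idF M) (cth M)) (fcomp d1 (cc M)) e
  = whisk d1 (fcomp (cc M) (idF M)) (idF M) (cth M) -> d2 = d1.
Proof.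
  intros E.
  pose proof (@eq_rect_fob M D (fun o : M -> D => forall X : M, Hom (o X) (munit D))
     (fcomp d2 (cc M)) (fcomp d1 (cc M)) e (whisk d2 (fcomp (cc M) (idF M)) (idF M) (cth M))) as L.
  pose proof (eq_trans (eq_sym L) E) as E'. clear L E.
  destruct d1 as [o1 m1 fe1 fi1 fm1], d2 as [o2 m2 fe2 fi2 fm2].
  assert (Ho : o2 = o1) by exact (f_equal (@fob _ _) e).
  subst o2.
  rewrite (UIP_refl (M -> D) o1 (f_equal (@fob M D) e)) in E'. simpl in E'.
  assert (Id1 : forall x, m1 x x tt = idm _) by (intros; exact (fmap_id _ H1 x)).
  assert (Id2 : forall x, m2 x x tt = idm _) by (intros; exact (fmap_id _ H2 x)).
  apply mf_inj in e. destruct e as [Em [Efe [Efi Efm]]]. simpl in *.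
  rewrite Id1, Id2, !cmp_idl in Efe. rewrite Id1, Id2, !cmp_idr in Efi.
  assert (fm2 = fm1).
  { extensionality a. extensionality b.
    pose proof (f_equal (fun F => F a b) Efm) as Q. simpl in Q. rewrite Id1, Id2, !cmp_idl in Q. exact Q. }
  subst fe2 fi2 fm2.
  assert (W : forall X, m2 X (munit M) tt = m1 X (munit M) tt).
  { intros X. pose proof (f_equal (fun F => F X) E') as Q. simpl in Q.
    apply cancel_l in Q; [exact Q|]. exists fe1. split; [apply (fe_invr _ H1) | apply (fe_invl _ H1)]. }
  assert (W' : forall X, m2 (munit M) X tt = m1 (munit M) X tt).
  { intros X.
    pose proof (fmap_cmp _ H1 (munit M) X (munit M) tt tt) as C1. simpl in C1.
    pose proof (fmap_cmp _ H2 X (munit M) X tt tt) as C2. simpl in C2.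
    rewrite Id1 in C1. rewrite Id2 in C2.
    rewrite <- (cmp_idr _ _ _ (m2 (munit M) X tt)), C1, <- W, cmp_assoc, <- C2. apply cmp_idl. }
  assert (m2 = m1).
  { extensionality a. extensionality b. extensionality t. destruct t.
    pose proof (fmap_cmp _ H1 a (munit M) b tt tt) as C1. simpl in C1.
    pose proof (fmap_cmp _ H2 a (munit M) b tt tt) as C2. simpl in C2.
    rewrite C1, C2, W, W'. reflexivity. }
  subst. reflexivity.
Qed.

Lemma c_strong {M A : MonCat} (a : MonFun (CM M) A) (Ha : is_monfun a)
  (phi : forall Y : M, Hom (fcomp a (cc M) Y) (munit A)) :
  is_theta (fcomp a (cc M)) phi ->
  (forall X, whisk (idF A) (fcomp a (cc M)) (idF M) phi X
             = whisk a (fcomp (cc M) (idF M)) (idF M) (cth M) X) ->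
  exists alpha : forall Y : CM M, Hom (a Y) (munit A),
    is_theta a alpha /\
    (forall Y, whisk (idF A) a (cc M) alpha Y = phi Y) /\
    (forall beta : forall Y : CM M, Hom (a Y) (munit A),
       is_theta a beta -> (forall Y, whisk (idF A) a (cc M) beta Y = phi Y) ->
       forall Y, beta Y = alpha Y).
Proof.
  intros [Hiso [Hnat [Hm Hu]]] Hw.
  assert (Hw' : forall X, phi X = fe_inv a ∘ fmap a (tt : Hom (X : CM M) (munit (CM M)))).
  { intros X. specialize (Hw X). unfold whisk, cth in Hw. simpl in Hw. rewrite cmp_idl in Hw. exact Hw. }
  assert (Fid : forall x : M, fmap a (tt : Hom (x : CM M) x) = idm (a x)).
  { intros x. exact (fmap_id _ Ha x). }
  exists phi. split; [|split].
  - split; [|split; [|split]].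
    + exact Hiso.
    + intros X Y f. rewrite cmp_idl, !Hw', <- cmp_assoc, <- (fmap_cmp _ Ha). reflexivity.
    + intros X Y. specialize (Hm X Y). simpl in Hm.
      rewrite Fid, cmp_idl in Hm. exact Hm.
    + simpl in Hu. rewrite Fid, cmp_idl in Hu. exact Hu.
  - intros Y. apply cmp_idl.
  - intros beta _ Hb Y. rewrite <- (Hb Y). symmetry. apply cmp_idl.
Qed.

Lemma MC_cokernel (M : MonCat) :
  exists (C : MonCat) (c : MonFun M C)
         (theta : forall X : M, Hom (fcomp c (idF M) X) (munit C)),
    is_strong_theta_cokernel MonCat (fun A => A) MC_ok (M:=M) (N:=M) (idF M) C c theta
    /\ theta_trivial C.
Proof.
  exists (CM M), (cc M), (cth M). split; [split|].
  - split; [apply cc_monfun|split; [apply cth_theta|]].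
    intros D d psi Hd Hpsi. split.
    + exists (dd d psi Hpsi). split; [apply dd_monfun; exact Hd | apply dd_fact; exact Hd].
    + intros d1 d2 H1 H2 [e1 E1] [e2 E2].
      clear Hd Hpsi. revert psi E1 e2 E2. destruct e1. intros psi E1 e2 E2.
      simpl in E1. subst psi.
      symmetry. exact (c_uniq d1 d2 H1 H2 e2 E2).
  - intros A a phi Ha Hphi Hw. exact (c_strong a Ha phi Hphi Hw).
  - apply CM_trivial.
Qed.

Definition Kbraid {M : SymMonCat} (X Y : KOb M) : KHom (Ktens X Y) (Ktens Y X).
Proof.
  exists (braid (kx X) (kx Y)). simpl.
  rewrite <- cmp_assoc, <- braid_nat, cmp_assoc, braid_II, cmp_idr. reflexivity.
Defined.

Definition KS (M : SymMonCat) : SymMonCat.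
Proof.
  refine (Build_SymMonCat (KM M) Kbraid _ _ _); intros; apply sig_eq; simpl.
  - apply braid_nat.
  - apply braid_invol.
  - apply hexagon.
Defined.

Definition CS (M : SymMonCat) : SymMonCat.
Proof.
  refine (Build_SymMonCat (CM M) (fun _ _ => tt) _ _ _); intros; apply unit_eq.
Defined.

Lemma kk_sym (M : SymMonCat) : @is_symfun (KS M) M (kk M).
Proof. intros a b. simpl. rewrite cmp_idl, cmp_idr. reflexivity. Qed.

Lemma hk_sym {M H : SymMonCat} (h : MonFun H M) phi Hphi Hh :
  is_symfun h -> @is_symfun H (KS M) (@hk M H h phi Hphi Hh).
Proof. intros Hs a b. apply sig_eq. simpl. apply Hs. Qed.

Lemma cc_sym (M : SymMonCat) : @is_symfun M (CS M) (cc M).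
Proof. intros a b. apply unit_eq. Qed.

Lemma dd_sym {M D : SymMonCat} (d : MonFun M D) psi Hpsi :
  is_symfun d -> @is_symfun (CS M) D (@dd M D d psi Hpsi).
Proof.
  intros Hs a b. simpl. rewrite <- (dfmap d psi Hpsi _ _ (@braid M a b)). apply Hs.
Qed.

Lemma SMC_kernel (M : SymMonCat) :
  exists (K : SymMonCat) (k : MonFun (smcat K) (smcat M))
         (theta : forall X : smcat K, Hom (fcomp (idF (smcat M)) k X) (munit (smcat M))),
    is_strong_theta_kernel SymMonCat smcat SMC_ok (M:=M) (N:=M) (idF (smcat M)) K k theta
    /\ theta_trivial (smcat K).
Proof.
  exists (KS M), (kk M), (kth M). split; [split|].
  - split; [split; [apply kk_monfun | apply kk_sym]|split; [apply kth_theta|]].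
    intros H h phi [Hh Hs] Hphi. split.
    + exists (hk h phi Hphi Hh). split; [split; [apply hk_monfun | apply hk_sym; exact Hs] | apply hk_fact].
    + intros h1 h2 _ _ [e1 E1] [e2 E2].
      clear Hh Hs Hphi. revert phi E1 e2 E2. destruct e1. intros phi E1 e2 E2.
      simpl in E1. subst phi.
      symmetry. exact (k_uniq h2 h1 e2 E2).
  - intros A a phi _ Hphi Hw. exact (k_strong a phi Hphi Hw).
  - apply KM_trivial.
Qed.

Lemma SMC_cokernel (M : SymMonCat) :
  exists (C : SymMonCat) (c : MonFun (smcat M) (smcat C))
         (theta : forall X : smcat M, Hom (fcomp c (idF (smcat M)) X) (munit (smcat C))),
    is_strong_theta_cokernel SymMonCat smcat SMC_ok (M:=M) (N:=M) (idF (smcat M)) C c theta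
    /\ theta_trivial (smcat C).
Proof.
  exists (CS M), (cc M), (cth M). split; [split|].
  - split; [split; [apply cc_monfun | apply cc_sym]|split; [apply cth_theta|]].
    intros D d psi [Hd Hs] Hpsi. split.
    + exists (dd d psi Hpsi). split; [split; [apply dd_monfun; exact Hd | apply dd_sym; exact Hs] | apply dd_fact; exact Hd].
    + intros d1 d2 [H1 _] [H2 _] [e1 E1] [e2 E2].
      clear Hd Hs Hpsi. revert psi E1 e2 E2. destruct e1. intros psi E1 e2 E2.
      simpl in E1. subst psi.
      symmetry. exact (c_uniq d1 d2 H1 H2 e2 E2).
  - intros A a phi [Ha _] Hphi Hw. exact (c_strong a Ha phi Hphi Hw).
  - apply CM_trivial.
Qed.

Theorem proposition9p2 :
  (forall M : MonCat, kernel_cokernel_of_id MonCat (fun A => A) MC_ok M) /\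
  (forall M : SymMonCat, kernel_cokernel_of_id SymMonCat smcat SMC_ok M).
Proof.
  split; intros M; split.
  - apply MC_kernel.
  - apply MC_cokernel.
  - apply SMC_kernel.
  - apply SMC_cokernel.
Qed.
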